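(* Let $t$ be a positive integer. There exists a function $h: \mathbb{N} \times \mathbb{N} \rightarrow \mathbb{N}$ such that, for all positive integers $\ell,d$, if $M$ is a matroid with the $(t,2t)$-property having at least $h(\ell,d)$ distinct $\ell$-element circuits, then $M$ has a collection of $d$ pairwise disjoint $2t$-element cocircuits.
   Context: A matroid $M$ has the $(t,2t)$-property if every $t$-element subset of $E(M)$ is contained in both a $2t$-element circuit and a $2t$-element cocircuit of $M$. $\mathbb{N}$ denotes the set of positive integers. *)

(* Defs.v *)
From mathcomp Require Import all_boot.
Set Implicit Arguments. Unset Strict Implicit. Unset Printing Implicit Defensive.

Record matroid (T : finType) := Matroid {
  indep : {set T} -> bool;
  indep0 : indep set0;
  indep_sub : forall A B : {set T}, A \subset B -> indep B -> indep A;
  indep_aug : forall A B : {set T}, indep A -> indep B -> #|A| < #|B| ->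
                exists2 x, x \in B :\: A & indep (x |: A)
}.

Section MatroidNotions.
Variables (T : finType) (M : matroid T).

Definition is_basis (B : {set T}) : bool := maxset (indep M) B.

Definition circuit (C : {set T}) : bool := minset (fun X => ~~ indep M X) C.

(* cocircuits: circuits of the dual matroid, i.e. minimal sets meeting
   every basis (equivalently, minimal sets not contained in any cobasis). *)
Definition cocircuit (C : {set T}) : bool :=
  minset (fun X : {set T} => [forall B : {set T}, is_basis B ==> (X :&: B != set0)]) C.

Definition t2t_property (t : nat) : Prop :=
  forall X : {set T}, #|X| = t ->
    (exists2 C, circuit C & (#|C| = 2 * t) /\ X \subset C) /\
    (exists2 D, cocircuit D & (#|D| = 2 * t) /\ X \subset D).

End MatroidNotions.

(* Main.v *)
Require Import Defs.
From mathcomp Require Import all_boot zify.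
Set Implicit Arguments. Unset Strict Implicit. Unset Printing Implicit Defensive.

Lemma maxind (T : finType) (M : matroid T) (A S : {set T}) :
  A \subset S -> indep M A -> exists I : {set T},
  [/\ A \subset I, I \subset S, indep M I &
     forall J : {set T}, A \subset J -> J \subset S -> indep M J -> #|J| <= #|I|].
Proof.
move=> AS iA.
have PA : [&& A \subset A, A \subset S & indep M A] by rewrite subxx AS iA.
case: (@arg_maxnP _ A (fun J : {set T} => [&& A \subset J, J \subset S & indep M J]) (fun J : {set T} => #|J|) PA) => I /and3P[AI IS iI] mx.
exists I; split=> // J AJ JS iJ; apply: mx; by rewrite AJ JS iJ.
Qed.

Lemma circuit_dep (T : finType) (M : matroid T) (C : {set T}) : circuit M C -> ~~ indep M C.
Proof. by case/minsetP. Qed.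

Lemma circuit_sub (T : finType) (M : matroid T) (C B : {set T}) :
  circuit M C -> B \subset C -> B != C -> indep M B.
Proof.
case/minsetP=> _ mn BC BnC; apply/negPn/negP=> dB.
by move: (mn B dB BC); move/eqP: BnC.
Qed.

Lemma circuit_del (T : finType) (M : matroid T) (C : {set T}) x :
  circuit M C -> x \in C -> indep M (C :\ x).
Proof.
move=> cC xC; apply: (circuit_sub cC); first exact: subsetDl.
apply/eqP=> E; by move: xC; rewrite -E !inE eqxx.
Qed.

Lemma dep_circuit (T : finType) (M : matroid T) (X : {set T}) :
  ~~ indep M X -> exists2 C, circuit M C & C \subset X.
Proof.
move=> dX.
have ex : exists A, (fun Y : {set T} => (Y \subset X) && ~~ indep M Y) A.
  by exists X; rewrite subxx dX.
case: (ex_minset ex) => C /minsetP[/andP[CX dC] mn].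
exists C => //; apply/minsetP; split=> // B dB BC.
by apply: mn => //; rewrite (subset_trans BC CX) dB.
Qed.

Lemma coloop (T : finType) (M : matroid T) (S I : {set T}) f :
  (forall C : {set T}, circuit M C -> f \in C -> ~~ (C \subset S)) ->
  I \subset S -> indep M I -> f \in S -> indep M (f |: I).
Proof.
move=> nC IS iI fS; apply/negPn/negP=> d.
case: (dep_circuit d) => C cC CfI.
case fC: (f \in C).
  move: (nC C cC fC); apply/negP/negPn.
  apply: (subset_trans CfI); by rewrite subUset sub1set fS IS.
have CI : C \subset I.
  apply/subsetP=> x xC; move: (subsetP CfI x xC); rewrite !inE.
  by case/orP=> // /eqP E; move: fC; rewrite -E xC.
by move: (circuit_dep cC); rewrite (indep_sub CI iI).
Qed.

Lemma strong_elim (T : finType) (M : matroid T) (C1 C2 : {set T}) e f :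
  circuit M C1 -> circuit M C2 -> e \in C1 -> e \in C2 -> f \in C1 -> f \notin C2 ->
  exists C : {set T}, [/\ circuit M C, f \in C & C \subset (C1 :|: C2) :\ e].
Proof.
move=> c1 c2 e1 e2 f1 f2.
set U := C1 :|: C2; set S := U :\ e.
case: (boolP [exists C, [&& circuit M C, f \in C & C \subset S]]).
  by case/existsP=> C /and3P[cC fC CS]; exists C.
rewrite negb_exists => /forallP nC.
have nC' : forall C, circuit M C -> f \in C -> ~~ (C \subset S).
  by move=> C cC fC; move: (nC C); rewrite cC fC.
have fe : f != e by apply/eqP=> E; move: f2; rewrite E e2.
have A1 : C2 :\ e \subset U :\ f.
  apply/subsetP=> x; rewrite !inE => /andP[xe x2]; rewrite x2 orbT andbT.
  by apply/eqP=> E; move: f2; rewrite -E x2.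
case: (maxind A1 (circuit_del c2 e2)) => I [AI IUf iI mxI].
have eI : e \notin I.
  apply/negP=> eI; move: (circuit_dep c2); rewrite (@indep_sub _ M C2 I) //.
  apply/subsetP=> x x2; case: (x =P e) => [->//|/eqP xe].
  by apply: (subsetP AI); rewrite !inE xe x2.
have IS : I \subset S.
  apply/subsetP=> x xI; move: (subsetP IUf x xI); rewrite !inE => /andP[_ ->].
  by rewrite andbT; apply/eqP=> E; move: eI; rewrite -E xI.
have fS : f \in S by rewrite !inE fe f1.
have ifI := coloop nC' IS iI fS.
have fI : f \notin I by apply/negP=> fI; move: (subsetP IUf f fI); rewrite !inE eqxx.
have A2 : C1 :\ f \subset U by apply: subset_trans (subsetDl _ _) (subsetUl _ _).
case: (maxind A2 (circuit_del c1 f1)) => L [AL LU iL mxL].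
have fL : f \notin L.
  apply/negP=> fL; move: (circuit_dep c1); rewrite (@indep_sub _ M C1 L) //.
  apply/subsetP=> x x1; case: (x =P f) => [->//|/eqP xf].
  by apply: (subsetP AL); rewrite !inE xf x1.
have LI : #|L| <= #|I|.
  rewrite leqNgt; apply/negP=> lt.
  case: (indep_aug iI iL lt) => x; rewrite inE => /andP[xI xL] ixI.
  have : #|x |: I| <= #|I|.
    apply: mxI => //.
      by apply: subset_trans AI (subsetUr _ _).
    rewrite subUset IUf andbT sub1set !inE; apply/andP; split; last by move: (subsetP LU x xL); rewrite !inE.
    by apply/eqP=> E; move: fL; rewrite -E xL.
  by rewrite cardsU1 xI add1n ltnn.
have lt : #|L| < #|f |: I| by rewrite cardsU1 fI.
case: (indep_aug iL ifI lt) => x; rewrite inE => /andP[xL xfI] ixL.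
have : #|x |: L| <= #|L|.
  apply: mxL => //.
    by apply: subset_trans AL (subsetUr _ _).
  rewrite subUset LU andbT sub1set.
  move: xfI; rewrite !inE => /orP[/eqP->|xI]; first by rewrite f1.
  by move: (subsetP IUf x xI); rewrite !inE => /andP[_ ->].
by rewrite cardsU1 xL add1n ltnn.
Qed.

Lemma basis_card (T : finType) (M : matroid T) (B J : {set T}) :
  is_basis M B -> indep M J -> #|B| <= #|J| -> is_basis M J.
Proof.
case/maxsetP=> iB mB iJ le; apply/maxsetP; split=> // K iK JK.
apply/eqP; rewrite eq_sym eqEcard JK /= leqNgt; apply/negP=> lt.
have lt2 : #|B| < #|K| by apply: leq_trans lt.
case: (indep_aug iB iK lt2) => x; rewrite inE => /andP[xB xK] ixB.
by move: (mB _ ixB (subsetUr _ _)) => E; move: xB; rewrite -E !inE eqxx.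
Qed.

Lemma orthogonal (T : finType) (M : matroid T) (C D : {set T}) :
  circuit M C -> cocircuit M D -> #|C :&: D| != 1.
Proof.
move=> cC /minsetP[PD mD]; apply/negP=> /cards1P[e CDe].
have eCD : e \in C :&: D by rewrite CDe set11.
move: (eCD); rewrite inE => /andP[eC eD].
have nP : ~~ [forall B : {set T}, is_basis M B ==> ((D :\ e) :&: B != set0)].
  apply/negP=> P'; have := mD _ P' (subsetDl _ _) => E.
  by move: eD; rewrite -E !inE eqxx.
case/forallPn: nP => B; rewrite negb_imply negbK => /andP[bB /eqP DB0].
have eB : e \in B.
  move/forallP: PD => /(_ B); rewrite bB /= => /set0Pn[y]; rewrite inE => /andP[yD yB].
  case: (y =P e) => [<-//|/eqP ye].
  have : y \in (D :\ e) :&: B by rewrite !inE ye yD yB.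
  by rewrite DB0 inE.
set S := (B :|: C) :\ e.
have A : C :\ e \subset S by apply: setSD; apply: subsetUr.
case: (maxind A (circuit_del cC eC)) => J [AJ JS iJ mxJ].
have BJ : #|B| <= #|J|.
  rewrite leqNgt; apply/negP=> lt.
  case/maxsetP: bB => iB _.
  case: (indep_aug iJ iB lt) => x; rewrite inE => /andP[xJ xB] ixJ.
  case: (x =P e) => [xe|/eqP xe].
    move: (circuit_dep cC); rewrite (@indep_sub _ M C (x |: J)) //.
    apply/subsetP=> y yC; rewrite inE; case: (y =P e) => [->|/eqP ye]; first by rewrite xe set11.
    by rewrite (subsetP AJ) ?orbT // !inE ye yC.
  have : #|x |: J| <= #|J|.
    apply: mxJ => //; first exact: subset_trans AJ (subsetUr _ _).
    by rewrite subUset JS andbT sub1set !inE xe xB.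
  by rewrite cardsU1 xJ add1n ltnn.
have bJ := basis_card bB iJ BJ.
move/forallP: PD => /(_ J); rewrite bJ /= => /set0Pn[y]; rewrite inE => /andP[yD yJ].
move: (subsetP JS y yJ); rewrite !inE => /andP[ye /orP[yB|yC]].
  have : y \in (D :\ e) :&: B by rewrite !inE ye yD yB.
  by rewrite DB0 inE.
have : y \in C :&: D by rewrite inE yC yD.
by rewrite CDe inE (negbTE ye).
Qed.

Lemma disjP (T : finType) (A B : {set T}) :
  reflect (forall x, x \in A -> x \in B -> False) [disjoint A & B].
Proof.
rewrite -setI_eq0; apply: (iffP eqP) => [E x xA xB|H].
  have : x \in A :&: B by rewrite inE xA xB.
  by rewrite E inE.
by apply/setP=> x; rewrite !inE; apply/negP=> /andP[xA xB]; apply: (H x).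
Qed.

Lemma subset_card_ex (U : finType) (A : {set U}) k : k <= #|A| ->
  exists G : {set U}, G \subset A /\ #|G| = k.
Proof.
elim: k => [|k IH] lt; first by exists set0; rewrite sub0set cards0.
case: (IH (ltnW lt)) => G [GA cG].
have : 0 < #|A :\: G| by rewrite cardsD (setIidPr GA) cG subn_gt0.
rewrite card_gt0 => /set0Pn[x]; rewrite inE => /andP[xG xA].
exists (x |: G); split; first by rewrite subUset sub1set xA GA.
by rewrite cardsU1 xG cG.
Qed.

Lemma circuit_nonempty (T : finType) (M : matroid T) (C : {set T}) :
  circuit M C -> C != set0.
Proof. move=> cC; apply/eqP=> E; move: (circuit_dep cC); by rewrite E indep0. Qed.

Lemma cocircuit_in_cover (T : finType) (M : matroid T) t (G : {set {set T}}) :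
  0 < t -> t2t_property M t ->
  (forall C, C \in G -> circuit M C) ->
  {in G &, forall A B : {set T}, A != B -> [disjoint A & B]} -> #|G| = t ->
  exists D : {set T}, [/\ cocircuit M D, #|D| = 2 * t & D \subset cover G].
Proof.
move=> tpos tp cG dG cardG.
have : 0 < #|G| by rewrite cardG.
rewrite card_gt0 => /set0Pn[C0 C0G].
case/set0Pn: (circuit_nonempty (cG _ C0G)) => x0 _.
set rep := fun C : {set T} => odflt x0 [pick x in C].
have repC : forall C, C \in G -> rep C \in C.
  move=> C CG; rewrite /rep; case: pickP => [x //|].
  by case/set0Pn: (circuit_nonempty (cG _ CG)) => y yC /(_ y); rewrite yC.
have dis : forall C C' x, C \in G -> C' \in G -> x \in C -> x \in C' -> C = C'.
  move=> C C' x CG C'G xC xC'; apply/eqP/negPn/negP=> ne.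
  by move: (dG _ _ CG C'G ne) => /disjP /(_ x xC xC').
set X := [set rep C | C in G].
have cX : #|X| = t.
  rewrite card_in_imset ?cardG // => C C' CG C'G E.
  by apply: (dis _ _ (rep C) CG C'G (repC _ CG)); rewrite E repC.
case: (tp X cX) => _ [D coD [cD XD]].
set y := fun C : {set T} => odflt x0 [pick z in (D :&: C) :\ rep C].
have yC : forall C, C \in G -> y C \in (D :&: C) :\ rep C.
  move=> C CG; rewrite /y; case: pickP => [x //|none].
  have : #|C :&: D| != 1 by apply: orthogonal; [apply: cG | ].
  suff -> : C :&: D = [set rep C] by rewrite cards1.
  apply/setP=> z; rewrite !inE; apply/idP/idP => [/andP[zC zD]|/eqP->].
    by apply/negPn/negP=> ne; move: (none z); rewrite !inE ne zD zC.
  rewrite repC // (subsetP XD) //; exact: imset_f.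
set Y := [set y C | C in G].
have cY : #|Y| = t.
  rewrite card_in_imset ?cardG // => C C' CG C'G E.
  move: (yC _ CG) (yC _ C'G); rewrite !inE E => /and3P[_ _ h1] /and3P[_ _ h2].
  exact: (dis _ _ (y C') CG C'G h1 h2).
have XY : [disjoint X & Y].
  apply/disjP=> z /imsetP[C CG ->] /imsetP[C' C'G E].
  move: (yC _ C'G); rewrite !inE -E => /and3P[ne _ h].
  have := dis _ _ _ CG C'G (repC _ CG) h => EE.
  by move: ne; rewrite EE eqxx.
have YD : Y \subset D.
  apply/subsetP=> z /imsetP[C CG ->]; by move: (yC _ CG); rewrite !inE => /and3P[].
have eD : X :|: Y = D.
  apply/eqP; rewrite eqEcard subUset XD YD /= cD.
  move: (leq_card_setU X Y) => [_]; rewrite XY => /eqP ->; by rewrite cX cY; lia.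
exists D; split => //; rewrite -eD subUset; apply/andP; split; apply/subsetP=> z.
  by case/imsetP=> C CG ->; apply/bigcupP; exists C => //; apply: repC.
case/imsetP=> C CG ->; apply/bigcupP; exists C => //.
by move: (yC _ CG); rewrite !inE => /and3P[].
Qed.

Lemma part3 (T : finType) (M : matroid T) t :
  0 < t -> t2t_property M t -> forall d (F0 : {set {set T}}),
  (forall C, C \in F0 -> circuit M C) ->
  {in F0 &, forall A B : {set T}, A != B -> [disjoint A & B]} -> t * d <= #|F0| ->
  exists F : {set {set T}}, [/\ #|F| = d,
     (forall D, D \in F -> cocircuit M D /\ #|D| = 2 * t), trivIset F &
     forall D, D \in F -> D \subset cover F0].
Proof.
move=> tpos tp; elim=> [|d IH] F0 cF0 dF0 le.
  exists set0; split; rewrite ?cards0 //; try by move=> D; rewrite inE.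
  by apply/trivIsetP=> A B; rewrite inE.
have : t <= #|F0| by apply: leq_trans le; rewrite leq_pmulr.
case/subset_card_ex=> G [GF cG].
have cGG : forall C, C \in G -> circuit M C by move=> C CG; apply: cF0; apply: (subsetP GF).
have dG : {in G &, forall A B : {set T}, A != B -> [disjoint A & B]}.
  by move=> A B AG BG; apply: dF0; apply: (subsetP GF).
case: (cocircuit_in_cover tpos tp cGG dG cG) => D [coD cD DG].
set F1 := F0 :\: G.
have sF1 : F1 \subset F0 by apply: subsetDl.
have cF1 : forall C, C \in F1 -> circuit M C by move=> C CG; apply: cF0; apply: (subsetP sF1).
have dF1 : {in F1 &, forall A B : {set T}, A != B -> [disjoint A & B]}.
  by move=> A B AG BG; apply: dF0; apply: (subsetP sF1).
have le1 : t * d <= #|F1|.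
  rewrite /F1 cardsD (setIidPr GF) cG; move: le; rewrite mulnS; lia.
case: (IH F1 cF1 dF1 le1) => F [cF coF tF sF].
have disGF : forall x, x \in cover G -> x \in cover F1 -> False.
  move=> x /bigcupP[C CG xC] /bigcupP[C' C'F xC'].
  move: C'F; rewrite inE => /andP[C'G C'F0].
  have ne : C != C' by apply/eqP=> E; move: C'G; rewrite -E CG.
  by move: (dF0 _ _ (subsetP GF _ CG) C'F0 ne) => /disjP /(_ x xC xC').
have D0 : D != set0 by rewrite -card_gt0 cD muln_gt0 tpos.
have DF : D \notin F.
  apply/negP=> DF; case/set0Pn: D0 => x xD.
  exact: (disGF x (subsetP DG x xD) (subsetP (sF D DF) x xD)).
have covS : forall P : {set {set T}}, P \subset F0 -> cover P \subset cover F0.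
  move=> P PF; apply/subsetP=> x /bigcupP[C CP xC]; apply/bigcupP; exists C => //.
  exact: (subsetP PF).
exists (D |: F); split.
- by rewrite cardsU1 DF cF.
- by move=> D'; rewrite !inE => /orP[/eqP->|/coF].
- apply/trivIsetP=> A B; rewrite !inE => /orP[/eqP->|AF] /orP[/eqP->|BF] ne.
  + by rewrite eqxx in ne.
  + apply/disjP=> x xD xB; exact: (disGF x (subsetP DG x xD) (subsetP (sF B BF) x xB)).
  + apply/disjP=> x xA xD; exact: (disGF x (subsetP DG x xD) (subsetP (sF A AF) x xA)).
  + by move/trivIsetP: tF; apply.
- move=> D'; rewrite !inE => /orP[/eqP->|D'F].
    exact: subset_trans DG (covS _ GF).
  exact: subset_trans (sF _ D'F) (covS _ sF1).
Qed.

Definition fam (T : finType) (M : matroid T) (Z : {set T}) (S : {set {set T}}) :=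
  [/\ forall C, C \in S -> circuit M C,
      forall C, C \in S -> C :\: Z != set0 &
      {in S &, forall A B : {set T}, A != B -> [disjoint A :\: Z & B :\: Z]}].

Lemma arith1 a b : a <= 2 * b + 1 -> a.+2 <= 2 * (1 + b) + 1.
Proof. lia. Qed.

Lemma pairing (T : finType) (M : matroid T) (Z : {set T}) z : z \in Z ->
  forall n (s : seq {set T}), size s <= n -> uniq s ->
  (forall C, C \in s -> [/\ circuit M C, z \in C & C :\: Z != set0]) ->
  {in s &, forall A B : {set T}, A != B -> [disjoint A :\: Z & B :\: Z]} ->
  exists S' : {set {set T}}, [/\ fam M (Z :\ z) S', size s <= 2 * #|S'| + 1 &
     forall C' x, C' \in S' -> x \in C' :\: (Z :\ z) -> exists2 C, C \in s & x \in C :\: Z].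
Proof.
move=> zZ; elim=> [|n IH] s.
  rewrite leqn0 => /nilP-> _ _ _; exists set0; split => //; last by move=> C' x; rewrite inE.
  by split=> [C|C|A B]; rewrite inE.
case: s => [|a [|b s']] sz us hs ds;
  try solve [exists set0; rewrite cards0; split => //; [by split=> [C|C|A B]; rewrite inE | by move=> C' x; rewrite inE]].
have sz' : size s' <= n by move: sz => /=; lia.
move: us => /= /andP[]; rewrite inE negb_or => /andP[ab as'] /andP[bs' us'].
have hs' : forall C, C \in s' -> [/\ circuit M C, z \in C & C :\: Z != set0].
  by move=> C Cs; apply: hs; rewrite !inE Cs !orbT.
have ds' : {in s' &, forall A B : {set T}, A != B -> [disjoint A :\: Z & B :\: Z]}.
  by move=> A B As Bs; apply: ds; rewrite !inE ?As ?Bs !orbT.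
case: (IH s' sz' us' hs' ds') => S1 [[cS1 nS1 dS1] szS1 covS1].
have [ca za na] : [/\ circuit M a, z \in a & a :\: Z != set0] by apply: hs; rewrite !inE eqxx.
have [cb zb nb] : [/\ circuit M b, z \in b & b :\: Z != set0] by apply: hs; rewrite !inE eqxx orbT.
have ain : a \in [:: a, b & s'] by rewrite !inE eqxx.
have bin : b \in [:: a, b & s'] by rewrite !inE eqxx orbT.
have dab := ds _ _ ain bin ab.
have das : forall c x, c \in s' -> x \in a :\: Z -> x \in c :\: Z -> False.
  move=> c x cs xa xc.
  have ne : a != c by apply/eqP=> E; move: as'; rewrite E cs.
  have cin : c \in [:: a, b & s'] by rewrite !inE cs !orbT.
  by move/disjP: (ds _ _ ain cin ne) => /(_ x xa xc).
have dbs : forall c x, c \in s' -> x \in b :\: Z -> x \in c :\: Z -> False.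
  move=> c x cs xa xc.
  have ne : b != c by apply/eqP=> E; move: bs'; rewrite E cs.
  have cin : c \in [:: a, b & s'] by rewrite !inE cs !orbT.
  by move/disjP: (ds _ _ bin cin ne) => /(_ x xa xc).
case/set0Pn: na => f0 f0a.
have f0b : f0 \notin b.
  apply/negP=> fb; move/disjP: dab => /(_ f0 f0a); apply.
  by move: f0a; rewrite !inE fb => /andP[->].
have f0a' : f0 \in a by move: f0a; rewrite inE => /andP[].
case: (strong_elim ca cb za zb f0a' f0b) => C' [cC' f0C' C'sub].
have C'part : forall x, x \in C' :\: (Z :\ z) -> x \in a :\: Z \/ x \in b :\: Z.
  move=> x; rewrite !inE => /andP[xZ xC']; move: (subsetP C'sub x xC').
  rewrite !inE => /andP[xz /orP[xa|xb]].
    by left; rewrite xa andbT; move: xZ; rewrite xz.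
  by right; rewrite xb andbT; move: xZ; rewrite xz.
have f0Z : f0 \notin Z by move: f0a; rewrite inE => /andP[].
have f0part : f0 \in C' :\: (Z :\ z) by rewrite !inE (negbTE f0Z) andbF f0C'.
have C'S1 : C' \notin S1.
  apply/negP=> CS; case: (covS1 _ _ CS f0part) => c cs fc.
  exact: (das c f0 cs f0a fc).
have disC' : forall D, D \in S1 -> [disjoint C' :\: (Z :\ z) & D :\: (Z :\ z)].
  move=> D DS; apply/disjP=> x xC xD.
  case: (covS1 _ _ DS xD) => c cs xc.
  by case: (C'part x xC) => [xa|xb]; [apply: (das c x) | apply: (dbs c x)].
exists (C' |: S1); split.
- split.
  + by move=> C; rewrite !inE => /orP[/eqP->//|]; apply: cS1.
  + move=> C; rewrite !inE => /orP[/eqP->|]; last by apply: nS1.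
    by apply/set0Pn; exists f0.
  + move=> A B; rewrite !inE => /orP[/eqP->|AS] /orP[/eqP->|BS] ne.
    * by rewrite eqxx in ne.
    * exact: disC'.
    * by rewrite disjoint_sym; apply: disC'.
    * exact: dS1.
- by rewrite cardsU1 C'S1 /=; apply: arith1.
- move=> D x /setU1P[->|DS] xD.
    by case: (C'part x xD) => h; [exists a | exists b]; rewrite // !inE eqxx ?orbT.
  by case: (covS1 _ _ DS xD) => c cs xc; exists c; rewrite // !inE cs !orbT.
Qed.

Lemma arith2 a b N : 3 * N <= a + b -> b < N -> N <= a./2.
Proof. lia. Qed.

Lemma arith3 n m : n <= 2 * m + 1 -> n./2 <= m.
Proof. lia. Qed.

Lemma part2 (T : finType) (M : matroid T) c : forall k (Z : {set T}) (S : {set {set T}}),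
  #|Z| <= k -> fam M Z S -> c * 3 ^ k <= #|S| ->
  exists F0 : {set {set T}}, [/\ forall C, C \in F0 -> circuit M C,
    {in F0 &, forall A B : {set T}, A != B -> [disjoint A & B]} & c <= #|F0|].
Proof.
have base : forall k (S : {set {set T}}), fam M set0 S -> c * 3 ^ k <= #|S| ->
  exists F0 : {set {set T}}, [/\ forall C, C \in F0 -> circuit M C,
    {in F0 &, forall A B : {set T}, A != B -> [disjoint A & B]} & c <= #|F0|].
  move=> k S [cS _ dS] le; exists S; split => //.
    by move=> A B AS BS ne; move: (dS A B AS BS ne); rewrite !setD0.
  by apply: leq_trans _ le; rewrite leq_pmulr // expn_gt0.
elim=> [|k IH] Z S cZ fS le.
  move: cZ; rewrite leqn0 cards_eq0 => /eqP Z0; move: fS; rewrite Z0 => fS.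
  exact: (base 0 S fS le).
case: (set_0Vmem Z) => [Z0|[z zZ]].
  by move: fS; rewrite Z0 => fS; apply: (base k.+1 S fS le).
have cZ' : #|Z :\ z| <= k by move: cZ; rewrite (cardsD1 z Z) zZ.
case: fS => [cS nS dS].
set Sz := S :&: [set C : {set T} | z \in C].
set Snz := S :\: [set C : {set T} | z \in C].
have split : #|Sz| + #|Snz| = #|S| by apply: cardsID.
case: (leqP (c * 3 ^ k) #|Snz|) => [lenz|ltnz].
  apply: (IH (Z :\ z) Snz cZ') => //.
  have eq : forall C, C \in Snz -> C :\: (Z :\ z) = C :\: Z.
    move=> C; rewrite !inE => /andP[zC _]; apply/setP=> x; rewrite !inE.
    by case: (x =P z) => [->|]; rewrite ?(negbTE zC) ?andbF.
  split.
  - by move=> C CS; apply: cS; move: CS; rewrite !inE => /andP[].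
  - by move=> C CS; rewrite eq //; apply: nS; move: CS; rewrite !inE => /andP[].
  - move=> A B AS BS ne; rewrite !eq //; apply: dS ne.
      by move: AS; rewrite !inE => /andP[].
    by move: BS; rewrite !inE => /andP[].
have inSz : forall C, C \in Sz -> C \in S /\ z \in C.
  by move=> C; rewrite !inE => /andP[-> ->].
case: (@pairing T M Z z zZ (size (enum Sz)) (enum Sz) (leqnn _) (enum_uniq _)).
- move=> C; rewrite mem_enum => /inSz[CS zC]; split => //; [exact: cS | exact: nS].
- move=> A B; rewrite !mem_enum => /inSz[AS _] /inSz[BS _]; exact: dS.
move=> S' [fS' szS' _].
apply: (IH (Z :\ z) S' cZ' fS').
move: le; rewrite expnS mulnCA -split => le.
have : c * 3 ^ k <= (size (enum Sz))./2 by rewrite -cardE; apply: (arith2 le ltnz).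
move=> h; exact: leq_trans h (arith3 szS').
Qed.

Lemma arith4 a m l g : a < m -> 0 < l -> 0 < g -> a * (l * g.-1) < m * l * g.
Proof.
move=> am lp gp; apply: (@leq_ltn_trans (a * (l * g))).
  by rewrite leq_mul2l leq_mul2l leq_pred !orbT.
by rewrite -mulnA ltn_pmul2r ?muln_gt0 ?lp ?gp.
Qed.

Lemma part1 (T : finType) (M : matroid T) m l : forall s (Y : {set T}) (S : {set {set T}}),
  #|Y| + s = l ->
  (forall C, C \in S -> [/\ circuit M C, #|C| = l & Y \subset C]) ->
  2 * (m * l) ^ s <= #|S| ->
  exists (Z : {set T}) (S0 : {set {set T}}), [/\ #|Z| <= l, fam M Z S0 & m <= #|S0|].
Proof.
elim=> [|s IH] Y S cY hS le.
  have : #|S| <= 1.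
    rewrite -(cards1 Y); apply: subset_leq_card; apply/subsetP=> C CS.
    case: (hS C CS) => _ cC YC; rewrite inE eq_sym eqEcard YC cC.
    by rewrite -cY addn0 leqnn.
  by move: le; rewrite expn0 muln1 => le h; move: (leq_trans le h).
have lpos : 0 < l by rewrite -cY addnS.
have nonempty : forall C, C \in S -> C :\: Y != set0.
  move=> C CS; case: (hS C CS) => _ cC YC; apply/negP=> /eqP E.
  have : C \subset Y by rewrite -setD_eq0 E.
  move/subset_leq_card; rewrite cC -cY; lia.
set P := fun S0 : {set {set T}} => (S0 \subset S) &&
  [forall A in S0, forall B in S0, (A != B) ==> [disjoint A :\: Y & B :\: Y]].
have P0 : P set0 by rewrite /P sub0set; apply/forall_inP=> A; rewrite inE.
case: (@arg_maxnP _ set0 P (fun S0 => #|S0|) P0) => S0 /andP[S0S dS0] mx.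
have dS0' : {in S0 &, forall A B : {set T}, A != B -> [disjoint A :\: Y & B :\: Y]}.
  move=> A B AS BS ne; move/forall_inP: dS0 => /(_ A AS) /forall_inP /(_ B BS).
  by rewrite ne.
case: (leqP m #|S0|) => [ge|lt].
  exists Y, S0; split => //; first by rewrite -cY leq_addr.
  split => //.
    by move=> C CS; case: (hS C (subsetP S0S C CS)).
  by move=> C CS; apply: nonempty; apply: (subsetP S0S).
have hit : forall C, C \in S -> exists C', [/\ C' \in S0 &
    exists v, v \in C' :\: Y /\ v \in C].
  move=> C CS.
  case: (boolP [exists C' in S0, [exists v in C' :\: Y, v \in C]]).
    case/exists_inP=> C' C'S /exists_inP[v vC' vC]; exists C'; split => //.
    by exists v.
  move=> /exists_inPn nh; exfalso.
  have CS0 : C \notin S0.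
    apply/negP=> CS0; move: (nh C CS0) => /exists_inPn h.
    case/set0Pn: (nonempty C CS) => v vC; move: (h v vC).
    by move: vC; rewrite inE => /andP[_ ->].
  have PC : P (C |: S0).
    apply/andP; split; first by rewrite subUset sub1set CS S0S.
    apply/forall_inP=> A /setU1P[->|AS]; apply/forall_inP=> B /setU1P[->|BS];
      apply/implyP=> ne.
    + by rewrite eqxx in ne.
    + apply/disjP=> x xC xB; move: (nh B BS) => /exists_inPn /(_ x xB).
      by move: xC; rewrite inE => /andP[_ ->].
    + apply/disjP=> x xA xC; move: (nh A AS) => /exists_inPn /(_ x xA).
      by move: xC; rewrite inE => /andP[_ ->].
    + exact: dS0' AS BS ne.
  by move: (mx _ PC) => /=; rewrite cardsU1 CS0 add1n ltnn.
set fib := fun v => [set C in S | v \in C].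
case: (boolP [exists C' in S0, [exists v in C' :\: Y, 2 * (m * l) ^ s <= #|fib v|]]).
  case/exists_inP=> C' C'S /exists_inP[v vC' big].
  have vY : v \notin Y by move: vC'; rewrite inE => /andP[].
  apply: (IH (v |: Y) (fib v)) => //.
    by rewrite cardsU1 vY add1n addSn -addnS.
  move=> C; rewrite inE => /andP[CS vC]; case: (hS C CS) => cC cardC YC.
  by split => //; rewrite subUset sub1set vC YC.
move=> /exists_inPn small; exfalso.
set g := 2 * (m * l) ^ s.
have gpos : 0 < g by rewrite muln_gt0 /= expn_gt0 muln_gt0 lpos andbT; case: (m) lt.
have le1 : #|S| <= \sum_(C in S) \sum_(C' in S0) \sum_(v in C' :\: Y) (v \in C : nat).
  rewrite -sum1_card; apply: leq_sum => C CS.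
  case: (hit C CS) => C' [C'S [v [vC' vC]]].
  rewrite (bigD1 C') //= (bigD1 v) //= vC; lia.
have le2 : \sum_(C in S) \sum_(C' in S0) \sum_(v in C' :\: Y) (v \in C : nat)
    <= \sum_(C' in S0) (l * g.-1).
  rewrite exchange_big /=; apply: leq_sum => C' C'S.
  rewrite exchange_big /=.
  apply: (@leq_trans (\sum_(v in C' :\: Y) g.-1)).
    apply: leq_sum => v vC'.
    have : #|fib v| < g by move: (small C' C'S) => /exists_inPn /(_ v vC'); rewrite ltnNge.
    move=> h; rewrite -ltnS prednK //; apply: leq_trans _ h; rewrite ltnS.
    rewrite /fib -sum1_card big_mkcond /= [X in _ <= X]big_mkcond /=.
    apply: leq_sum => C _; rewrite inE; by case: (C \in S); case: (v \in C).
  rewrite sum_nat_const leq_mul2r; apply/orP; right.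
  case: (hS C' (subsetP S0S C' C'S)) => _ cC' _.
  by rewrite -cC'; apply: subset_leq_card; apply: subsetDl.
move: le2; rewrite sum_nat_const => le2.
have := leq_trans le (leq_trans le1 le2).
rewrite mulnC.
have := arith4 lt lpos gpos.
rewrite expnS /g; move: ((m * l) ^ s) => X; lia.
Qed.

Unset Implicit Arguments.

Theorem lemma5p4 (t : nat) (t_pos : 0 < t) :
  exists h : nat -> nat -> nat,
    forall l d : nat, 0 < l -> 0 < d ->
    forall (T : finType) (M : matroid T),
      t2t_property M t ->
      h l d <= #|[set C : {set T} | circuit M C & #|C| == l]| ->
      exists F : {set {set T}},
        [/\ #|F| = d,
            (forall D, D \in F -> cocircuit M D /\ #|D| = 2 * t)
          & trivIset F].
Proof.
exists (fun l d => 2 * ((t * d * 3 ^ l) * l) ^ l).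
move=> l d lpos dpos T M tp le.
have hS : forall C, C \in [set C : {set T} | circuit M C & #|C| == l] ->
    [/\ circuit M C, #|C| = l & set0 \subset C].
  by move=> C; rewrite inE => /andP[cC /eqP cl]; rewrite sub0set.
have e0 : #|set0 : {set T}| + l = l by rewrite cards0.
case: (@part1 T M (t * d * 3 ^ l) l l set0 _ e0 hS le)
  => Z [S0 [cZ fS0 mS0]].
case: (@part2 T M (t * d) l Z S0 cZ fS0 mS0) => F0 [cF0 dF0 cardF0].
case: (@part3 T M t t_pos tp d F0 cF0 dF0 cardF0) => F [cF coF tF _].
by exists F; split.
Qed.
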